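(* Let $n=p_1^{\alpha_1}p_2^{\alpha_2}\cdots p_r^{\alpha_r}$, where $r\geq 2$, $\alpha_1,\ldots,\alpha_r$ are positive integers and $p_1<p_2<\cdots<p_r$ are primes. Suppose that at least one of the following holds: (i) $p_1\geq r+1$ and $p_r>r\,p_{r-1}$; (ii) $p_{i+1}>r\,p_i$ for each $i\in\{1,2,\ldots,r-1\}$. Then $\delta(\mathcal{P}(C_n))=\deg(p_r^{\alpha_r})$.
   Context: For a finite group $G$, the power graph $\mathcal{P}(G)$ is the simple undirected graph with vertex set $G$ in which two distinct vertices are adjacent if one is an integral power of the other. $C_n$ denotes the cyclic group of order $n$, identified with $\mathbb{Z}_n=\{0,1,\ldots,n-1\}$, so a positive divisor $d<n$ of $n$ is regarded as the element $d\in\mathbb{Z}_n$. $\deg(a)$ is the degree of vertex $a$ in $\mathcal{P}(C_n)$ and $\delta$ denotes minimum degree. *)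

(* Defs.v *)
From mathcomp Require Import all_boot.
Set Implicit Arguments. Unset Strict Implicit. Unset Printing Implicit Defensive.

(* C_n is identified with Z_n = {0,...,n-1} (additive), so the integral
   powers of a are the multiples k*a mod n; it suffices to take k in 'I_n. *)
Definition is_power (n a b : nat) : bool := [exists k : 'I_n, (k * a) %% n == b].

Definition pg_adj (n a b : nat) : bool :=
  (a != b) && (is_power n a b || is_power n b a).

Definition pg_deg (n a : nat) : nat := #|[set b : 'I_n | pg_adj n a b]|.

(* minimum degree of P(C_n); all degrees are < n, so n is a neutral default
   (for n >= 1) *)
Definition pg_min_deg (n : nat) : nat := \big[minn/n]_(a < n) pg_deg n a.

(* Main.v *)
Require Import Defs.
From mathcomp Require Import all_boot zify.

Lemma card_count n (P : pred nat) : #|[set b : 'I_n | P b]| = count P (iota 0 n).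
Proof. by rewrite cardsE cardE /enum_mem size_filter -val_enum_ord count_map enumT. Qed.

Lemma per_count k m (P : pred nat) :
  count (fun b => P (b %% m)) (iota 0 (k * m)) = k * count P (iota 0 m).
Proof.
elim: k => [|k IH]; first by rewrite mul0n.
rewrite mulSnr iotaD count_cat IH add0n -[k * m]addn0 iotaDl count_map mulSnr; congr (_ + _).
apply: eq_in_count => c; rewrite mem_iota /= add0n => Hc.
by rewrite modnMDl modn_small.
Qed.

Lemma totient_count n : totient n = count (coprime n) (iota 0 n).
Proof.
rewrite totient_count_coprime -sum1_count [RHS]big_mkcond /=.
by rewrite /index_iota subn0; apply: eq_bigr => i _; case: coprime.
Qed.

Lemma count_coprime_mul k m :
  count (fun b => coprime b m) (iota 0 (k * m)) = k * totient m.
Proof.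
rewrite totient_count -per_count; apply: eq_in_count => b _ /=.
by rewrite coprime_modr coprime_sym.
Qed.

Lemma totient_mul_le a b : totient (a * b) <= a * totient b.
Proof.
rewrite -count_coprime_mul totient_count; apply: sub_count => c /=.
by rewrite coprimeMl => /andP[_]; rewrite coprime_sym.
Qed.

Lemma count_inj k n (Q P : pred nat) (f : nat -> nat) : injective f ->
  (forall c, c < k -> Q c -> (f c < n) && P (f c)) ->
  count Q (iota 0 k) <= count P (iota 0 n).
Proof.
move=> finj H; rewrite -!size_filter -(size_map f).
apply: uniq_leq_size; first by rewrite map_inj_uniq ?filter_uniq ?iota_uniq.
move=> y /mapP[c]; rewrite mem_filter mem_iota /= add0n => /andP[Qc ck] ->.
by case/andP: (H c ck Qc) => a b; rewrite mem_filter mem_iota b a.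
Qed.

Lemma dvd_mod_gcd g n x : g %| n -> (g %| x %% n) = (g %| x).
Proof. by move=> H; rewrite /dvdn (modn_dvdm _ H). Qed.

Lemma is_powerP n a b : 0 < n -> b < n -> is_power n a b = (gcdn a n %| b).
Proof.
move=> n0 bn; apply/existsP/idP.
  case=> k /eqP <-; rewrite dvd_mod_gcd ?dvdn_gcdr //.
  by apply: dvdn_mull; apply: dvdn_gcdl.
move=> H; have [a00|a0] := posnP a.
  move: H; rewrite a00 gcd0n => H.
  have b0 : b = 0 by apply/eqP; move: H; rewrite /dvdn modn_small.
  by exists (Ordinal n0); rewrite b0 /= mul0n mod0n.
case: (egcdnP n a0) => km kn E _.
exists (Ordinal (ltn_pmod (km * (b %/ gcdn a n)) n0)) => /=.
rewrite modnMml -mulnA [(_ %/ _) * a]mulnC mulnA E mulnDl -mulnA.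
by rewrite [gcdn a n * _]mulnC divnK // -modnDml mulnCA modnMr add0n modn_small.
Qed.

Definition Rel n g b := (g %| gcdn b n) || (gcdn b n %| g).

Lemma count_split (T : Type) (P Q : pred T) s :
  count P s = count (fun x => Q x && P x) s + count (fun x => ~~ Q x && P x) s.
Proof. by elim: s => //= x s ->; case: (Q x); case: (P x) => /=; lia. Qed.

Lemma Rel_refl n a : Rel n (gcdn a n) a.
Proof. by rewrite /Rel dvdnn. Qed.

Lemma deg_formula n a : 0 < n -> a < n ->
  (pg_deg n a).+1 = count (Rel n (gcdn a n)) (iota 0 n).
Proof.
move=> n0 an; rewrite /pg_deg card_count [RHS](count_split _ _ (fun b => a == b)).
rewrite addnC -addn1; congr (_ + _).
  apply: eq_in_count => b; rewrite mem_iota /= add0n => bn.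
  rewrite /pg_adj !is_powerP // /Rel.
  have [<-|ab] := eqVneq a b; first by [].
  rewrite /= dvdn_gcd dvdn_gcdr andbT; congr orb.
  by rewrite dvdn_gcd dvdn_gcdr andbT.
rewrite (eq_in_count (a2 := pred1 a)); last first.
  move=> b _ /=; have [<-|ab] := eqVneq a b; first by rewrite Rel_refl.
  by [].
have := count_uniq_mem a (iota_uniq 0 n); rewrite mem_iota add0n an /= => <-.
by apply: eq_count => x /=; rewrite eq_sym.
Qed.

Definition M (p alpha : nat -> nat) k := \prod_(1 <= i < k) p i ^ alpha i.

Lemma M_coprime p alpha k x :
  (forall i, 1 <= i < k -> coprime (p i ^ alpha i) x) -> coprime (M p alpha k) x.
Proof.
move=> H; rewrite /M big_nat_cond; apply: (big_ind (fun y => coprime y x)); first exact: coprime1n.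
  by move=> y z; rewrite coprimeMl => -> ->.
by move=> i /andP[Hi _]; apply: H.
Qed.

Lemma M_pdiv p alpha k s P : prime s ->
  (forall i, 1 <= i < k -> prime (p i) /\ p i <= P) ->
  s %| M p alpha k -> s <= P.
Proof.
move=> sp H; rewrite /M big_nat_cond; apply/implyP.
apply: (big_ind (fun y => (s %| y) ==> (s <= P))).
- by rewrite Euclid_dvd1.
- by move=> y z Hy Hz; rewrite Euclid_dvdM //; apply/implyP => /orP[]; [exact: (implyP Hy)|exact: (implyP Hz)].
move=> i /andP[Hi _]; case: (H i Hi) => pp pP.
rewrite Euclid_dvdX // dvdn_prime2 //; apply/implyP => /andP[/eqP -> _] //.
Qed.

Lemma mono p r : (forall i, 1 <= i < r -> p i < p i.+1) ->
  forall i j, 1 <= i -> i < j -> j <= r -> p i < p j.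
Proof.
move=> H i j i1; elim: j => // j IH ij jr.
have [->|ij'] := eqVneq i j; first by apply: H; lia.
apply: (ltn_trans (IH _ _)); try lia; apply: H; lia.
Qed.

Lemma p_gt p r :
  (forall i, 1 <= i <= r -> prime (p i)) ->
  (forall i, 1 <= i < r -> p i < p i.+1) ->
  forall j, 1 <= j <= r -> j < p j.
Proof.
move=> Hp Hi; elim=> // j IHj /andP[j1 jr].
case: j IHj j1 jr => [|j] IHj j1 jr.
  by apply: prime_gt1; apply: Hp; lia.
have := IHj (ltac:(lia)); have := Hi j.+1 (ltac:(lia)); lia.
Qed.

Lemma M_le p alpha r :
  (forall i, 1 <= i <= r -> prime (p i)) ->
  (forall i, 1 <= i < r -> p i < p i.+1) ->
  forall k, 1 <= k <= r -> M p alpha k <= k * totient (M p alpha k).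
Proof.
move=> Hp Hi; elim=> // k IH /andP[k1 kr].
case: k IH k1 kr => [|k] IH k1 kr; first by rewrite /M big_geq.
have k1' : 1 <= k.+1 by lia.
have {}IH := IH (ltac:(lia)).
have pk : k.+1 < p k.+1 by have := @p_gt p r Hp Hi k.+1; lia.
set K := k.+1 in IH pk k1' *.
have cop : coprime (M p alpha K) (p K ^ alpha K).
  apply: M_coprime => i Hik; apply: coprimeXl; rewrite coprime_sym; apply: coprimeXl.
  rewrite prime_coprime ?Hp ?dvdn_prime2 ?Hp; try lia.
  by have := @mono p r Hi i K; lia.
rewrite /M big_nat_recr //= -/(M p alpha K) totient_coprime //.
have [a0|a1] := posnP (alpha K).
  by rewrite a0 expn0 muln1 [totient 1]/= muln1; lia.
rewrite totient_pfactor ?Hp //; last lia.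
have -> : p K ^ alpha K = p K * p K ^ (alpha K).-1 by rewrite -expnS prednK.
set X := M _ _ _ in IH *; set F := totient X; set Y := p K ^ _; set P := p K in pk *.
have : X * (P * Y) <= K * F * (P * Y) by rewrite leq_mul2r IH orbT.
have : K * F * (P * Y) <= K.+1 * (F * (P.-1 * Y)).
  have : K * P <= K.+1 * P.-1 by lia.
  move=> h; have := leq_mul h (leqnn (F * Y)).
  have -> : K * F * (P * Y) = K * P * (F * Y) by nia.
  by have -> : K.+1 * (F * (P.-1 * Y)) = K.+1 * P.-1 * (F * Y) by nia.
lia.
Qed.

Lemma bigmin_le (s : seq nat) x0 (F : nat -> nat) i :
  i \in s -> \big[minn/x0]_(j <- s) F j <= F i.
Proof.
elim: s => // j s IH; rewrite inE big_cons => /orP[/eqP->|h]; first exact: geq_minl.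
by rewrite geq_min IH // orbT.
Qed.

Lemma aux_rt r t : 0 < r -> 0 < t -> r + t <= t * r + 1.
Proof. by case: r => [|r] // _; case: t => [|t] // _; rewrite mulSn mulnS; lia. Qed.

Lemma final_arith cR cG A B m t u r s :
  1 < r -> 0 < t -> A * (u * t) + B * (u * t) <= cG ->
  cR + A <= m + u.+1 * t * A -> m <= r * A -> A <= s * B -> r * s <= u ->
  cR <= cG.
Proof.
move=> r2 t1 L U mr tm sP.
have h1 : r * A <= u * B.
  apply: (leq_trans (leq_mul (leqnn r) tm)); rewrite mulnA leq_mul2r sP orbT //.
have h2 : t * (r * A) <= t * (u * B) by rewrite leq_mul2l h1 orbT.
have h3 : A * r + A * t <= A * t * r + A.
  have hh : r + t <= t * r + 1 by apply: aux_rt; lia.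
  by have := leq_mul (leqnn A) hh; rewrite !mulnDr muln1 mulnA.
lia.
Qed.

Theorem corollary1p4 (n r : nat) (p alpha : nat -> nat) :
  2 <= r ->
  (forall i, 1 <= i <= r -> prime (p i)) ->
  (forall i, 1 <= i <= r -> 0 < alpha i) ->
  (forall i, 1 <= i < r -> p i < p i.+1) ->
  n = \prod_(1 <= i < r.+1) p i ^ alpha i ->
  ((r.+1 <= p 1 /\ r * p r.-1 < p r) \/
   (forall i, 1 <= i < r -> r * p i < p i.+1)) ->
  pg_min_deg n = pg_deg n (p r ^ alpha r).
Proof.
move=> r2 Hp Ha Hi Hn Hc.
have Hpr : r * p r.-1 < p r.
  case: Hc => [[_ h]|h]; first exact: h.
  by have := h r.-1 (ltac:(lia)); rewrite prednK //; lia.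
set m := M p alpha r.
set q := p r ^ alpha r.
have Hnm : n = m * q by rewrite Hn big_nat_recr //; lia.
have pr : prime (p r) by apply: Hp; lia.
have ar : 0 < alpha r by apply: Ha; lia.
have q0 : 0 < q by rewrite expn_gt0 prime_gt0.
have m0 : 0 < m.
  rewrite /m /M big_nat_cond; apply: (big_ind (fun y => 0 < y)) => //.
    by move=> x y; rewrite muln_gt0 => -> ->.
  move=> i /andP[Hir _]; rewrite expn_gt0 prime_gt0 //; apply: Hp; lia.
have cop : coprime m q.
  apply: M_coprime => i Hir; apply: coprimeXl; rewrite coprime_sym; apply: coprimeXl.
  rewrite prime_coprime // dvdn_prime2 //; last by apply: Hp; lia.
  by have := @mono p r Hi i r; lia.
have m2 : 1 < m.
  have p1 : prime (p 1) by apply: Hp; lia.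
  apply: (leq_trans (prime_gt1 p1)); apply: dvdn_leq => //.
  rewrite /m /M big_ltn; last lia.
  apply: dvdn_mulr; apply: dvdn_exp => //; apply: Ha; lia.
have n0 : 0 < n by rewrite Hnm muln_gt0 m0.
have qn : q < n by rewrite Hnm -{1}[q]mul1n ltn_pmul2r.
have gq : gcdn q n = q by apply/gcdn_idPl; rewrite Hnm dvdn_mull.
have mn : m %| n by rewrite Hnm dvdn_mulr.
have key : forall a, a < n -> pg_deg n q <= pg_deg n a.
  move=> a an; have E1 := @deg_formula n a n0 an; have E2 := @deg_formula n q n0 qn.
  rewrite gq in E2.
  suff : count (Rel n q) (iota 0 n) <= count (Rel n (gcdn a n)) (iota 0 n) by lia.
  set g := gcdn a n; have gn : g %| n := dvdn_gcdr a n.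
  have [cg|cg] := boolP (coprime g m).
    have : g %| m * q by rewrite -Hnm.
    rewrite Gauss_dvdr // => /(dvdn_pfactor _ _ pr) [gam gle gE].
    apply: sub_count => b /orP [qG|Gq]; rewrite /Rel.
      by apply/orP; left; apply: dvdn_trans qG; rewrite gE /q dvdn_exp2l.
    move: Gq => /(dvdn_pfactor _ _ pr) [j jle GE].
    rewrite gE GE; case: (leqP j gam) => h; apply/orP.
      by right; apply: dvdn_exp2l.
    by left; apply: dvdn_exp2l; apply: ltnW.
  set h := gcdn g m.
  have h1 : 1 < h.
    have : 0 < h by rewrite gcdn_gt0 m0 orbT.
    by move: cg; rewrite /coprime -/h; case: h => [|[|]].
  set s := pdiv h; have sp : prime s := pdiv_prime h1.
  have sg : s %| g by apply: dvdn_trans (pdiv_dvd h) (dvdn_gcdl g m).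
  have sm : s %| m by apply: dvdn_trans (pdiv_dvd h) (dvdn_gcdr g m).
  have sn : s %| n := dvdn_trans sm mn.
  have s0 : 0 < s := prime_gt0 sp.
  have sP : s <= p r.-1.
    apply: (@M_pdiv p alpha r s (p r.-1) sp) => // i Hir; split; first by apply: Hp; lia.
    have [->|ne] := eqVneq i r.-1; first by [].
    by have := @mono p r Hi i r.-1; lia.
  have L : totient n + totient (n %/ s) <= count (Rel n g) (iota 0 n).
    rewrite (count_split _ _ (fun b => coprime b n)); apply: leq_add.
      rewrite totient_count; apply: sub_count => b cb.
      have e : gcdn b n = 1 by apply/eqP; rewrite -/(coprime b n) coprime_sym.
      by rewrite coprime_sym cb /Rel e dvd1n orbT.
    rewrite totient_count; apply: (@count_inj _ _ _ _ (muln s)).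
      by move=> x y H; apply/eqP; rewrite -(eqn_pmul2l s0) H.
    move=> c cns ccop.
    have En : n = s * (n %/ s) by rewrite mulnC divnK.
    have Gs : gcdn (s * c) n = s.
      by rewrite {1}En -muln_gcdr gcdnC (eqP ccop) muln1.
    apply/andP; split; first by rewrite {1}En ltn_pmul2l.
    rewrite /coprime /Rel Gs sg orbT andbT.
    by rewrite neq_ltn (prime_gt1 sp) orbT.
  have U : count (Rel n q) (iota 0 n) + totient m <= m + q * totient m.
    have S1 : count (Rel n q) (iota 0 n) <=
              count (predU (fun b => q %| b) (fun b => coprime b m)) (iota 0 n).
      apply: sub_count => b /orP [qG|Gq]; apply/orP.
        by left; exact: (dvdn_trans qG (dvdn_gcdl b n)).
      right; rewrite /coprime -dvdn1 -(eqP cop) dvdn_gcd dvdn_gcdr andTb.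
      apply: (dvdn_trans _ Gq); rewrite dvdn_gcd dvdn_gcdl andTb.
      exact: dvdn_trans (dvdn_gcdr b m) mn.
    have C1 : count (fun b => q %| b) (iota 0 n) = m.
      rewrite Hnm -[m]muln1 mulnAC muln1 (eq_count (a2 := fun b => (fun c => c == 0) (b %% q))) //.
      rewrite (per_count m q (fun c => c == 0)); congr (_ * _).
      have := count_uniq_mem 0 (iota_uniq 0 q); rewrite mem_iota leq0n add0n q0 => E.
      rewrite -[1]/(nat_of_bool true) -E.
      by apply: eq_count => x; rewrite eq_sym.
    have C2 : count (fun b => coprime b m) (iota 0 n) = q * totient m.
      by rewrite Hnm mulnC count_coprime_mul.
    have C3 : totient m <= count (predI (fun b => q %| b) (fun b => coprime b m)) (iota 0 n).
      rewrite totient_count; apply: (@count_inj _ _ _ _ (fun c => c * q)).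
        by move=> x y H; apply/eqP; rewrite -(eqn_pmul2r q0) H.
      move=> c cm cc; apply/andP; split; first by rewrite Hnm ltn_pmul2r.
      apply/andP; split; first exact: dvdn_mull.
      by rewrite coprimeMl coprime_sym cc coprime_sym cop.
    have := count_predUI (fun b => q %| b) (fun b => coprime b m) (iota 0 n).
    rewrite C1 C2 => <-; exact: leq_add S1 C3.
  have tn : totient n = totient m * totient q by rewrite Hnm totient_coprime.
  have msm : m %/ s %| m by rewrite -{2}(divnK sm) dvdn_mulr.
  have tns : totient (n %/ s) = totient (m %/ s) * totient q.
    rewrite Hnm -divn_mulAC // totient_coprime //; exact: coprime_dvdl msm cop.
  have tm : totient m <= s * totient (m %/ s).
    by rewrite -{1}(divnK sm) mulnC totient_mul_le.
  have tq : totient q = (p r).-1 * p r ^ (alpha r).-1 by rewrite totient_pfactor.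
  have qE : q = p r * p r ^ (alpha r).-1 by rewrite /q -expnS prednK.
  have mr : m <= r * totient m.
    by apply: (@M_le p alpha r Hp Hi r); rewrite leqnn andbT (ltnW r2).
  rewrite tn tns tq in L.
  have Pu : p r = (p r).-1.+1 by rewrite prednK // prime_gt0.
  have U' : count (Rel n q) (iota 0 n) + totient m <=
     m + (p r).-1.+1 * p r ^ (alpha r).-1 * totient m by rewrite -Pu -qE.
  apply: (@final_arith _ _ _ _ _ _ _ _ _ r2 _ L U' mr tm); first by rewrite expn_gt0 prime_gt0.
  rewrite -ltnS -Pu; apply: leq_ltn_trans Hpr; exact: leq_mul (leqnn r) sP.
rewrite /pg_min_deg; apply/eqP; rewrite eqn_leq; apply/andP; split.
  rewrite -(big_mkord xpredT (fun a => pg_deg n a)); apply: bigmin_le.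
  by rewrite mem_index_iota qn.
apply: (big_ind (fun x => pg_deg n q <= x)).
- by rewrite /pg_deg; apply: leq_trans (max_card _) _; rewrite card_ord.
- by move=> x y hx hy; rewrite leq_min hx hy.
by move=> i _; apply: key; apply: ltn_ord.
Qed.
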